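(* Let $A$ be a finite alphabet and let $Z\subseteq A^+$ be a code such that $Z=XY$ for some non-empty $X,Y\subseteq A^+$. If $|X|=2$ or $|Y|=2$, then $Z$ is an alt-induced code.
   Context: $A^+$ is the set of non-empty words over $A$; $XY=\{xy:x\in X,y\in Y\}$. A set $Z\subseteq A^+$ is a code if every word admits at most one factorization into words of $Z$. For non-empty $X,Y\subseteq A^+$, $(X,Y)$ is an alternative code if no word of $A^+$ admits two different similar alternative factorizations on $(X,Y)$ (factorizations $u_1\cdots u_n$, $n\ge2$, $u_i\in X\cup Y$, alternating between $X$ and $Y$; similar = beginning in the same set and ending in the same set); equivalently, $XY$ is a code and the product $XY$ is unambiguous (each element of $XY$ has exactly one factorization $xy$ with $x\in X,y\in Y$). $Z$ is an alt-induced code if $Z=XY$ for some alternative code $(X,Y)$. *)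

(* Defs.v *)
From mathcomp Require Import all_boot.
Set Implicit Arguments.
Unset Strict Implicit.
Unset Printing Implicit Defensive.

Section Words.
Variable A : finType.
Definition word := seq A.
Definition lang := word -> Prop.

Definition subset_plus (X : lang) : Prop := forall w, X w -> w <> [::].

Definition nonempty_lang (X : lang) : Prop := exists w, X w.

Definition lprod (X Y : lang) : lang :=
  fun w => exists x y, X x /\ Y y /\ w = x ++ y.

Definition lang_card2 (X : lang) : Prop :=
  exists a b : word, a <> b /\ forall w, X w <-> (w = a \/ w = b).

Definition is_code (Z : lang) : Prop :=
  forall l1 l2 : seq word,
    (forall u, u \in l1 -> Z u) -> (forall u, u \in l2 -> Z u) ->
    flatten l1 = flatten l2 -> l1 = l2.

(* An alternative factorization on (X,Y): a list u_0 ... u_{n-1}, n >= 2,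
   alternating between X and Y; [startX = true] means u_0 is taken in X,
   [startX = false] means u_0 is taken in Y. *)
Definition alt_fact (X Y : lang) (startX : bool) (l : seq word) : Prop :=
  1 < size l /\
  forall i, i < size l ->
    (if startX (+) odd i then X else Y) (nth [::] l i).

(* (X,Y) is an alternative code: no word admits two different similar
   alternative factorizations (similar = same starting set and same ending
   set; the ending set is determined by the starting set and the parity of
   the number of factors). *)
Definition alt_code (X Y : lang) : Prop :=
  forall (startX : bool) (l1 l2 : seq word),
    alt_fact X Y startX l1 -> alt_fact X Y startX l2 ->
    odd (size l1) = odd (size l2) ->
    flatten l1 = flatten l2 -> l1 = l2.

Definition alt_induced (Z : lang) : Prop :=
  exists X Y : lang,
    subset_plus X /\ subset_plus Y /\ nonempty_lang X /\ nonempty_lang Y /\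
    alt_code X Y /\ (forall w, Z w <-> lprod X Y w).
End Words.

Arguments subset_plus {A} X.
Arguments nonempty_lang {A} X.
Arguments lprod {A} X Y _.
Arguments lang_card2 {A} X.
Arguments is_code {A} Z.
Arguments alt_fact {A} X Y startX l.
Arguments alt_code {A} X Y.
Arguments alt_induced {A} Z.

(* Main.v *)
Require Import Defs.
From mathcomp Require Import all_boot.
From Stdlib Require Import Classical.

Section Proof.
Variable A : finType.
Implicit Types X Y Z : lang A.

Lemma catL (T : Type) (s a b : seq T) : s ++ a = s ++ b -> a = b.
Proof. by elim: s => //= c s IH [] /IH. Qed.

Lemma catR (T : Type) (s a b : seq T) : a ++ s = b ++ s -> a = b.
Proof.
move=> H; have := congr1 rev H; rewrite !rev_cat => /catL.
by move/(congr1 rev); rewrite !revK.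
Qed.

Arguments catL {T s a b}.
Arguments catR {T s a b}.

Lemma catP (x y x' y' : word A) : x ++ y = x' ++ y' ->
  exists t, (x' = x ++ t /\ y = t ++ y') \/ (x = x' ++ t /\ y' = t ++ y).
Proof.
elim: x x' => [|c x IH] [|c' x'] /=.
- by move=> ->; exists [::]; left.
- by move=> ->; exists (c' :: x'); left.
- by move=> <-; exists (c :: x); right.
- case=> <- /IH [t [[-> ->]|[-> ->]]]; exists t; [left|right]; done.
Qed.

Definition Pal X Y (b : bool) (l : seq (word A)) :=
  forall i, i < size l -> (if b (+) odd i then X else Y) (nth [::] l i).

Lemma Pal_cons X Y b a r :
  Pal X Y b (a :: r) <-> (if b then X else Y) a /\ Pal X Y (~~ b) r.
Proof.
split.
- move=> H; split; first by have := H 0 isT; rewrite addbF.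
  move=> i Hi; have := H i.+1 Hi; rewrite /= addbN -addNb //.
- move=> [Ha Hr] [|i] /= Hi; first by rewrite addbF.
  by have := Hr i Hi; rewrite addbN -addNb.
Qed.

Lemma Pal_cat X Y b l1 l2 :
  Pal X Y b l1 -> Pal X Y (b (+) odd (size l1)) l2 -> Pal X Y b (l1 ++ l2).
Proof.
elim: l1 b => [|a r IH] b /=; first by rewrite addbF.
move=> /Pal_cons [Ha Hr] H2; apply/Pal_cons; split=> //; apply: IH => //.
by move: H2; rewrite addbN -addNb.
Qed.

Inductive ev_alt X Y : seq (word A) -> Prop :=
| ev_nil : ev_alt X Y [::]
| ev_cons x y r : X x -> Y y -> ev_alt X Y r -> ev_alt X Y (x :: y :: r).

Lemma Pal_ev X Y n l : size l <= n -> Pal X Y true l -> ~~ odd (size l) ->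
  ev_alt X Y l.
Proof.
elim: n l => [|n IH] [|x [|y r]] //=; try by constructor.
move=> Hs /Pal_cons [Hx /Pal_cons [Hy Hr]] Ho; constructor=> //.
apply: IH => //; first exact: ltnW.
by move: Ho; rewrite negbK.
Qed.

Fixpoint pairs (l : seq (word A)) : seq (word A) :=
  match l with a :: b :: r => (a ++ b) :: pairs r | _ => [::] end.

Lemma pairs_in X Y l : ev_alt X Y l -> forall u, u \in pairs l -> lprod X Y u.
Proof.
elim=> [|x y r Hx Hy _ IH] u //=; rewrite inE => /orP [/eqP ->|/IH //].
by exists x, y.
Qed.

Lemma pairs_flat X Y l : ev_alt X Y l -> flatten (pairs l) = flatten l.
Proof. by elim=> [|x y r _ _ _ IH] //=; rewrite IH catA. Qed.

Definition unamb X Y := forall x y x' y', X x -> Y y -> X x' -> Y y' ->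
  x ++ y = x' ++ y' -> x = x' /\ y = y'.

Lemma pairs_inj X Y l1 l2 : unamb X Y -> ev_alt X Y l1 -> ev_alt X Y l2 ->
  pairs l1 = pairs l2 -> l1 = l2.
Proof.
move=> U H1; elim: H1 l2 => [|x y r Hx Hy _ IH] l2 H2; case: H2 => //= x' y' r' Hx' Hy' H2.
by case=> /(U _ _ _ _ Hx Hy Hx' Hy') [-> ->] /(IH _ H2) ->.
Qed.

Arguments pairs_in {X Y l}.
Arguments pairs_flat {X Y l}.
Arguments pairs_inj {X Y l1 l2}.

Lemma key X Y : nonempty_lang X -> nonempty_lang Y -> is_code (lprod X Y) ->
  unamb X Y -> alt_code X Y.
Proof.
move=> [x0 Hx0] [y0 Hy0] C U b l1 l2 [_ P1] [_ P2] Ho Hf.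
pose pre := if b then [::] else [:: x0].
pose suf (l : seq (word A)) := if b == odd (size l) then [:: y0] else [::].
have ev : forall l, Pal X Y b l -> ev_alt X Y (pre ++ l ++ suf l).
  move=> l P; apply: (@Pal_ev _ _ _ _ (leqnn _)).
  - apply: Pal_cat; first by rewrite /pre; case: (b) => // i; rewrite ltnS leqn0 => /eqP ->.
    have -> : true (+) odd (size pre) = b by rewrite /pre; case: (b).
    apply: Pal_cat => //.
    rewrite /suf; case E: (b == odd (size l)) => //= [] [|] // _.
    by move/eqP: E => ->; rewrite addbb.
  - rewrite /pre /suf !size_cat !oddD; case: (b); case: (odd (size l)) => //=.
have E1 := ev _ P1; have E2 := ev _ P2.
have : pairs (pre ++ l1 ++ suf l1) = pairs (pre ++ l2 ++ suf l2).
  apply: C; [exact: pairs_in E1|exact: pairs_in E2|].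
  by rewrite (pairs_flat E1) (pairs_flat E2) !flatten_cat Hf /suf Ho.
move/(pairs_inj U E1 E2) => H.
have := catL H; rewrite /suf Ho; exact: catR.
Qed.

Lemma code_ext (Z W : lang A) : is_code Z -> (forall w, Z w <-> W w) -> is_code W.
Proof. by move=> C E l1 l2 H1 H2; apply: C => u Hu; apply/E; auto. Qed.

Lemma caseX Z X Y x x' t : is_code Z -> (forall w, Z w <-> lprod X Y w) ->
  subset_plus X -> subset_plus Y -> nonempty_lang Y -> X x -> X x' ->
  (forall w, X w -> w = x \/ w = x') -> x' = x ++ t -> t <> [::] ->
  alt_induced Z.
Proof.
move=> C E SX SY [y0 Hy0] Hx Hx' Xc Ex' Ht.
pose X' (w : word A) := w = x.
pose Y' (w : word A) := Y w \/ exists v, Y v /\ w = t ++ v.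
have EZ : forall w, Z w <-> lprod X' Y' w.
  move=> w; rewrite E; split.
  - move=> [u [v [Hu [Hv ->]]]]; case: (Xc _ Hu) => ->.
      by exists x, v; split => //; split => //; left.
    by exists x, (t ++ v); rewrite Ex' catA; split => //; split => //; right; exists v.
  - move=> [u [v [-> [[Hv|[v' [Hv' ->]]] ->]]]].
      by exists x, v.
    by exists x', v'; split => //; split => //; rewrite Ex' catA.
exists X', Y'; split; first by move=> w ->; apply: SX.
split; first by move=> w [/SY //|[v [_ ->]]]; case: (t) Ht.
split; first by exists x.
split; first by exists y0; left.
split=> //; apply: key; first by exists x.
- by exists y0; left.
- by apply: code_ext C _ => w; rewrite EZ.
- by move=> u v u' v' -> _ -> _ /catL ->.
Qed.

Lemma caseY Z X Y y y' t : is_code Z -> (forall w, Z w <-> lprod X Y w) ->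
  subset_plus X -> subset_plus Y -> nonempty_lang X -> Y y -> Y y' ->
  (forall w, Y w -> w = y \/ w = y') -> y = t ++ y' -> t <> [::] ->
  alt_induced Z.
Proof.
move=> C E SX SY [x0 Hx0] Hy Hy' Yc Ey Ht.
pose Y' (w : word A) := w = y'.
pose X' (w : word A) := X w \/ exists u, X u /\ w = u ++ t.
have EZ : forall w, Z w <-> lprod X' Y' w.
  move=> w; rewrite E; split.
  - move=> [u [v [Hu [Hv ->]]]]; case: (Yc _ Hv) => ->.
      by exists (u ++ t), y'; rewrite Ey catA; split => //; right; exists u.
    by exists u, y'; split => //; left.
  - move=> [u [v [[Hu|[u' [Hu' ->]]] [-> ->]]]].
      by exists u, y'.
    by exists u', y; split => //; split => //; rewrite Ey catA.
exists X', Y'; split.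
  by move=> w [/SX //|[u [Hu ->]]]; case: u Hu => [/SX //|]; case: (t) Ht.
split; first by move=> w ->; apply: SY.
split; first by exists x0; left.
split; first by exists y'.
split=> //; apply: key; first by exists x0; left.
- by exists y'.
- by apply: code_ext C _ => w; rewrite EZ.
- by move=> u v u' v' _ -> _ -> /catR ->.
Qed.

End Proof.

Lemma card2_pair (A : finType) (X : lang A) x x' : lang_card2 X -> X x -> X x' -> x <> x' ->
  forall w, X w -> w = x \/ w = x'.
Proof.
move=> [a [b [ab H]]] /H Hx /H Hx' xx' w /H Hw.
by move: xx'; case: Hx => ->; case: Hx' => ->; case: Hw => ->; tauto.
Qed.

Theorem mainTheorem3 (A : finType) (Z X Y : lang A) :
  subset_plus Z -> is_code Z ->
  subset_plus X -> subset_plus Y -> nonempty_lang X -> nonempty_lang Y ->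
  (forall w, Z w <-> lprod X Y w) ->
  lang_card2 X \/ lang_card2 Y ->
  alt_induced Z.
Proof.
move=> _ C SX SY NX NY E card.
case: (classic (exists x y x' y', X x /\ Y y /\ X x' /\ Y y' /\ x ++ y = x' ++ y' /\
   ~ (x = x' /\ y = y'))) => [[x [y [x' [y' [Hx [Hy [Hx' [Hy' [Eq Ne]]]]]]]]]|nE]; last first.
  exists X, Y; do 5 (split => //).
  apply: key => //; first by apply: code_ext C E.
  move=> x y x' y' Hx Hy Hx' Hy' Eq; apply: NNPP => Ne; apply: nE.
  by exists x, y, x', y'.
have [t Ht] := @catP A _ _ _ _ Eq.
case: card => card.
- have xx' : x <> x'.
    by move=> exx; apply: Ne; split=> //; move: Eq; rewrite exx => /catL.
  have Xc := @card2_pair A _ _ _ card Hx Hx' xx'.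
  case: Ht => [[e1 e2]|[e1 e2]].
  + apply: (@caseX A _ _ _ _ _ _ C E SX SY NY Hx Hx' Xc e1) => t0; apply: xx'.
    by rewrite e1 t0 cats0.
  + apply: (@caseX A _ _ _ _ _ _ C E SX SY NY Hx' Hx _ e1) => [w /Xc []|t0]; try tauto.
    by apply: xx'; rewrite e1 t0 cats0.
- have yy' : y <> y'.
    by move=> eyy; apply: Ne; split=> //; move: Eq; rewrite eyy => /catR.
  have Yc := @card2_pair A _ _ _ card Hy Hy' yy'.
  case: Ht => [[e1 e2]|[e1 e2]].
  + apply: (@caseY A _ _ _ _ _ _ C E SX SY NX Hy Hy' Yc e2) => t0; apply: yy'.
    by rewrite e2 t0.
  + apply: (@caseY A _ _ _ _ _ _ C E SX SY NX Hy' Hy _ e2) => [w /Yc []|t0]; try tauto.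
    by apply: yy'; rewrite e2 t0.
Qed.
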